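(* Let $(x_t)_{t\in\Omega}$ be a continuous frame for a Hilbert space $H$ with analysis operator $\Theta:H\to L_2(\Omega)$, and let $x,y\in H$ be such that $x\neq\lambda y$ for every scalar $|\lambda|=1$. Then there exist $x_o,y_o\in \operatorname{span}\{x,y\}$ with $\|x_o\|=1$, $\|y_o\|\le 1$ and $\langle x_o,y_o\rangle=0$ such that $$\frac{\big\||\Theta x|-|\Theta y|\big\|}{\min_{|\lambda|=1}\|x-\lambda y\|}\ \ge\ \frac{\big\||\Theta x_o|-|\Theta y_o|\big\|}{\min_{|\lambda|=1}\|x_o-\lambda y_o\|}\ =\ \frac{\big\||\Theta x_o|-|\Theta y_o|\big\|}{(1+\|y_o\|^2)^{1/2}}.$$
   Context: $H$ is a real or complex Hilbert space; scalars $\lambda$ range over the field of $H$. A family $(x_t)_{t\in\Omega}\subseteq H$ indexed by a measure space $(\Omega,\mu)$ (with $t\mapsto\langle x,x_t\rangle$ measurable for each $x$) is a continuous frame if there are constants $B\ge A>0$ with $A\|x\|^2\le\int_\Omega|\langle x,x_t\rangle|^2\,d\mu(t)\le B\|x\|^2$ for all $x\in H$; $A$ is a lower frame bound. Its analysis operator is $\Theta:H\to L_2(\Omega)$, $\Theta(x)=(\langle x,x_t\rangle)_{t\in\Omega}$, and $|\Theta x|$ denotes the function $t\mapsto|\langle x,x_t\rangle|$. Norms of $|\Theta x|-|\Theta y|$ are taken in $L_2(\Omega)$. A (discrete) frame is the case of counting measure on a countable index set. *)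

(* Defs.v *)
From HB Require Import structures.
From mathcomp Require Import all_boot all_order all_algebra complex.
Import Order.TTheory GRing.Theory Num.Theory.
From mathcomp Require Import all_classical all_reals all_analysis.

Set Implicit Arguments.
Unset Strict Implicit.
Unset Printing Implicit Defensive.

Local Open Scope ring_scope.
Local Open Scope classical_set_scope.

(* The scalar field: [scal R false] = R (real Hilbert spaces),         *)
(*                   [scal R true]  = R[i] (complex Hilbert spaces).   *)
Definition scal (R : realType) (c : bool) : numFieldType :=
  if c then (R[i] : numFieldType) else (R : numFieldType).

Definition sconj (R : realType) (c : bool) : scal R c -> scal R c :=
  match c return scal R c -> scal R c with
  | true => fun z : R[i] => conjc z
  | false => fun z : R => z
  end.

Definition sRe (R : realType) (c : bool) : scal R c -> R :=
  match c return scal R c -> R with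
  | true => fun z : R[i] => complex.Re z
  | false => fun z : R => z
  end.

Definition sIm (R : realType) (c : bool) : scal R c -> R :=
  match c return scal R c -> R with
  | true => fun z : R[i] => complex.Im z
  | false => fun z : R => 0
  end.

Definition sabs (R : realType) (c : bool) : scal R c -> R :=
  match c return scal R c -> R with
  | true => fun z : R[i] => complex.Re `|z|
  | false => fun z : R => `|z|
  end.

Definition is_inner_product (R : realType) (c : bool) (H : lmodType (scal R c))
    (ip : H -> H -> scal R c) : Prop :=
  [/\ (forall (a : scal R c) (x y z : H), ip (a *: x + y) z = a * ip x z + ip y z),
      (forall x y : H, ip y x = sconj (ip x y)),
      (forall x : H, sIm (ip x x) = 0 /\ 0 <= sRe (ip x x)) &
      (forall x : H, ip x x = 0 -> x = 0)].

Definition hnorm (R : realType) (c : bool) (H : lmodType (scal R c))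
    (ip : H -> H -> scal R c) (x : H) : R :=
  Num.sqrt (sRe (ip x x)).

Definition hcomplete (R : realType) (c : bool) (H : lmodType (scal R c))
    (ip : H -> H -> scal R c) : Prop :=
  forall u : nat -> H,
    (forall e : R, 0 < e -> exists N : nat, forall m n : nat,
        (N <= m)%N -> (N <= n)%N -> hnorm ip (u m - u n) < e) ->
    exists l : H, forall e : R, 0 < e -> exists N : nat, forall n : nat,
        (N <= n)%N -> hnorm ip (u n - l) < e.

(* min_{|lambda|=1} ||x - lambda y||  (the minimum is attained; we use inf) *)
Definition phase_dist (R : realType) (c : bool) (H : lmodType (scal R c))
    (ip : H -> H -> scal R c) (x y : H) : R :=
  inf [set r : R | exists l : scal R c, sabs l = 1 /\ r = hnorm ip (x - l *: y)].

Definition weakly_measurable (R : realType) (c : bool) (H : lmodType (scal R c))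
    (ip : H -> H -> scal R c) (d : measure_display) (T : measurableType d)
    (xt : T -> H) : Prop :=
  forall x : H, measurable_fun setT (fun t => sRe (ip x (xt t))) /\
                measurable_fun setT (fun t => sIm (ip x (xt t))).

Definition is_continuous_frame (R : realType) (c : bool) (H : lmodType (scal R c))
    (ip : H -> H -> scal R c) (d : measure_display) (T : measurableType d)
    (mu : {measure set T -> \bar R}) (xt : T -> H) : Prop :=
  weakly_measurable ip xt /\
  exists A B : R, 0 < A /\ A <= B /\
    forall x : H,
      ((A * hnorm ip x ^+ 2)%:E <=
         \int[mu]_(t in setT) ((sabs (ip x (xt t))) ^+ 2)%:E)%E /\
      (\int[mu]_(t in setT) ((sabs (ip x (xt t))) ^+ 2)%:E <=
         (B * hnorm ip x ^+ 2)%:E)%E.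

(* || |Theta x| - |Theta y| ||_{L_2(mu)}, where (Theta x)(t) = <x, x_t>.
   For a frame this integral is finite, so [fine] is harmless. *)
Definition absTheta_dist (R : realType) (c : bool) (H : lmodType (scal R c))
    (ip : H -> H -> scal R c) (d : measure_display) (T : measurableType d)
    (mu : {measure set T -> \bar R}) (xt : T -> H) (x y : H) : R :=
  Num.sqrt (fine (\int[mu]_(t in setT)
     ((sabs (ip x (xt t)) - sabs (ip y (xt t))) ^+ 2)%:E)).

(* Main.v *)
Require Import Defs.
From HB Require Import structures.
From mathcomp Require Import all_boot all_order all_algebra complex.
Import Order.TTheory GRing.Theory Num.Theory.
From mathcomp Require Import all_classical all_reals all_analysis.
From mathcomp Require Import measurable_realfun.
From mathcomp Require Import ring lra.
Set Implicit Arguments.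
Unset Strict Implicit.
Unset Printing Implicit Defensive.
Local Open Scope ring_scope.

Section Scal.
Variable R : realType.
Local Open Scope complex_scope.

Definition semb (c : bool) : R -> scal R c :=
  match c return R -> scal R c with
  | true => fun r => r%:C
  | false => fun r => r
  end.

Lemma sRe_add c (a b : scal R c) : sRe (a + b) = sRe a + sRe b.
Proof. by case: c a b => [[a1 a2] [b1 b2]|a b]. Qed.
Lemma sIm_add c (a b : scal R c) : sIm (a + b) = sIm a + sIm b.
Proof. case: c a b => [[a1 a2] [b1 b2]|a b] //=. by rewrite addr0. Qed.
Lemma sRe_mul c (a b : scal R c) : sRe (a * b) = sRe a * sRe b - sIm a * sIm b.
Proof. case: c a b => [[a1 a2] [b1 b2]|a b] //=. by rewrite mulr0 subr0. Qed.
Lemma sIm_mul c (a b : scal R c) : sIm (a * b) = sRe a * sIm b + sIm a * sRe b.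
Proof. case: c a b => [[a1 a2] [b1 b2]|a b] //=. by rewrite mulr0 mul0r addr0. Qed.
Lemma sRe_opp c (a : scal R c) : sRe (- a) = - sRe a.
Proof. by case: c a => [[a1 a2]|a]. Qed.
Lemma sIm_opp c (a : scal R c) : sIm (- a) = - sIm a.
Proof. case: c a => [[a1 a2]|a] //=. by rewrite oppr0. Qed.
Lemma sRe_semb c r : sRe (semb c r) = r.
Proof. by case: c. Qed.
Lemma sIm_semb c r : sIm (semb c r) = 0.
Proof. by case: c. Qed.
Lemma sRe_conj c (a : scal R c) : sRe (sconj a) = sRe a.
Proof. by case: c a => [[a1 a2]|a]. Qed.
Lemma sIm_conj c (a : scal R c) : sIm (sconj a) = - sIm a.
Proof. case: c a => [[a1 a2]|a] //=. by rewrite oppr0. Qed.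
Lemma sRe0 c : sRe (0 : scal R c) = 0. Proof. by case: c. Qed.
Lemma sIm0 c : sIm (0 : scal R c) = 0. Proof. by case: c. Qed.
Lemma s_ext c (a b : scal R c) : sRe a = sRe b -> sIm a = sIm b -> a = b.
Proof. case: c a b => [[a1 a2] [b1 b2]|a b] //= -> -> //. Qed.

Lemma sabs_def c (z : scal R c) : sabs z = Num.sqrt (sRe z ^+ 2 + sIm z ^+ 2).
Proof.
case: c z => [z|z] /=.
  by case: z.
by rewrite expr0n /= addr0 sqrtr_sqr.
Qed.

Lemma sabs_ge0 c (z : scal R c) : 0 <= sabs z.
Proof. by rewrite sabs_def sqrtr_ge0. Qed.

Lemma sabs_sq c (z : scal R c) : sabs z ^+ 2 = sRe z ^+ 2 + sIm z ^+ 2.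
Proof. by rewrite sabs_def sqr_sqrtr // addr_ge0 // sqr_ge0. Qed.

Lemma sqrt_tri (u1 u2 v1 v2 : R) :
  Num.sqrt ((u1 + v1) ^+ 2 + (u2 + v2) ^+ 2) <=
  Num.sqrt (u1 ^+ 2 + u2 ^+ 2) + Num.sqrt (v1 ^+ 2 + v2 ^+ 2).
Proof.
set a := Num.sqrt (u1 ^+ 2 + u2 ^+ 2).
set b := Num.sqrt (v1 ^+ 2 + v2 ^+ 2).
have a0 : 0 <= a by rewrite sqrtr_ge0.
have b0 : 0 <= b by rewrite sqrtr_ge0.
have ha : a ^+ 2 = u1 ^+ 2 + u2 ^+ 2 by rewrite sqr_sqrtr // addr_ge0 // sqr_ge0.
have hb : b ^+ 2 = v1 ^+ 2 + v2 ^+ 2 by rewrite sqr_sqrtr // addr_ge0 // sqr_ge0.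
have -> : a + b = Num.sqrt ((a + b) ^+ 2) by rewrite sqrtr_sqr ger0_norm // addr_ge0.
rewrite ler_sqrt; last by rewrite sqr_ge0.
have hab : u1 * v1 + u2 * v2 <= a * b.
  have : (u1 * v1 + u2 * v2) ^+ 2 <= (a * b) ^+ 2.
    rewrite exprMn ha hb. have := sqr_ge0 (u1 * v2 - u2 * v1). nra.
  move=> h; have ab0 := mulr_ge0 a0 b0; rewrite leNgt; apply/negP => hlt; have : (a * b) ^+ 2 < (u1 * v1 + u2 * v2) ^+ 2 by rewrite ltr_pXn2r // ?inE ?nnegrE //; apply: ltW; apply: (le_lt_trans ab0 hlt). rewrite ltNge h //.
nra.
Qed.

Lemma sabs_add c (a b : scal R c) : sabs (a + b) <= sabs a + sabs b.
Proof. by rewrite !sabs_def sRe_add sIm_add sqrt_tri. Qed.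

Lemma sabs_mul c (a b : scal R c) : sabs (a * b) = sabs a * sabs b.
Proof.
rewrite !sabs_def sRe_mul sIm_mul -sqrtrM ?addr_ge0 ?sqr_ge0 //.
congr Num.sqrt; ring.
Qed.

Lemma sabs_semb c r : sabs (semb c r) = `|r|.
Proof. by rewrite sabs_def sRe_semb sIm_semb expr0n /= addr0 sqrtr_sqr. Qed.

Lemma sabs_eq0 c (z : scal R c) : sabs z = 0 -> z = 0.
Proof.
move=> h; have := sabs_sq z; rewrite h expr0n /= => h2.
have h1 : sRe z = 0 by nra.
have h3 : sIm z = 0 by nra.
by apply: s_ext; rewrite ?sRe0 ?sIm0.
Qed.

Lemma semb_add c (r s : R) : semb c (r + s) = semb c r + semb c s.
Proof. by apply: s_ext; rewrite ?sRe_add ?sIm_add ?sRe_semb ?sIm_semb ?addr0. Qed.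
Lemma semb_mul c (r s : R) : semb c (r * s) = semb c r * semb c s.
Proof. by apply: s_ext; rewrite ?sRe_mul ?sIm_mul ?sRe_semb ?sIm_semb; ring. Qed.
Lemma semb0 c : semb c 0 = 0.
Proof. by apply: s_ext; rewrite ?sRe0 ?sIm0 ?sRe_semb ?sIm_semb. Qed.
Lemma sRe1 c : sRe (1 : scal R c) = 1. Proof. by case: c. Qed.
Lemma sIm1 c : sIm (1 : scal R c) = 0. Proof. by case: c. Qed.
Lemma semb1 c : semb c 1 = 1.
Proof. by apply: s_ext; rewrite ?sRe1 ?sIm1 ?sRe_semb ?sIm_semb. Qed.
Lemma sconj_semb c r : sconj (semb c r) = semb c r.
Proof. by apply: s_ext; rewrite ?sRe_conj ?sIm_conj ?sRe_semb ?sIm_semb ?oppr0. Qed.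
Lemma sconj_mul c (a b : scal R c) : sconj (a * b) = sconj a * sconj b.
Proof. by apply: s_ext; rewrite ?sRe_conj ?sIm_conj ?sRe_mul ?sIm_mul ?sRe_conj ?sIm_conj; ring. Qed.
Lemma sconj_add c (a b : scal R c) : sconj (a + b) = sconj a + sconj b.
Proof. by apply: s_ext; rewrite ?sRe_conj ?sIm_conj ?sRe_add ?sIm_add ?sRe_conj ?sIm_conj; ring. Qed.
Lemma sconjK c (a : scal R c) : sconj (sconj a) = a.
Proof. by apply: s_ext; rewrite ?sRe_conj ?sIm_conj ?opprK. Qed.
Lemma sabs_conj c (a : scal R c) : sabs (sconj a) = sabs a.
Proof. by rewrite !sabs_def sRe_conj sIm_conj sqrrN. Qed.
Lemma sRe_le_abs c (a : scal R c) : sRe a <= sabs a.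
Proof.
rewrite sabs_def; apply: le_trans (ler_norm (sRe a)) _.
by rewrite -sqrtr_sqr ler_sqrt ?addr_ge0 ?sqr_ge0 // lerDl sqr_ge0.
Qed.
Lemma sconj_mulr c (a : scal R c) : a * sconj a = semb c (sabs a ^+ 2).
Proof. by apply: s_ext; rewrite ?sRe_mul ?sIm_mul ?sRe_conj ?sIm_conj ?sRe_semb ?sIm_semb ?sabs_sq; ring. Qed.

Lemma sconj_opp c (a : scal R c) : sconj (- a) = - sconj a.
Proof. by apply: s_ext; rewrite ?sRe_conj ?sIm_conj ?sRe_opp ?sIm_opp ?sRe_conj ?sIm_conj. Qed.
Lemma sconj0 c : sconj (0 : scal R c) = 0.
Proof. by apply: s_ext; rewrite ?sRe_conj ?sIm_conj ?sRe0 ?sIm0 ?oppr0. Qed.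
Lemma semb_opp c r : semb c (- r) = - semb c r.
Proof. by apply: s_ext; rewrite ?sRe_opp ?sIm_opp ?sRe_semb ?sIm_semb ?oppr0. Qed.
Lemma semb_inj c r s : semb c r = semb c s -> r = s.
Proof. by move=> h; rewrite -(sRe_semb c r) h sRe_semb. Qed.
End Scal.

Section Key.
Variable R : realType.

Lemma sabs_sembM c r (a : scal R c) : sabs (semb c r * a) = `|r| * sabs a.
Proof. by rewrite sabs_mul sabs_semb. Qed.

Lemma key_ineq c (a b : scal R c) (s : R) : 0 <= s -> s <= 1 ->
  (sabs (semb c ((1 + s) / 2) * a + semb c ((s - 1) / 2) * b) -
   sabs (semb c ((s - 1) / 2) * a + semb c ((1 + s) / 2) * b)) ^+ 2
  <= (sabs a - sabs b) ^+ 2.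
Proof.
move=> s0 s1.
set u := _ + _ * b. set v := semb c ((s - 1) / 2) * a + _.
set A := sabs u. set B := sabs v.
have A0 : 0 <= A by apply: sabs_ge0.
have B0 : 0 <= B by apply: sabs_ge0.
have a0 : 0 <= sabs a by apply: sabs_ge0.
have b0 : 0 <= sabs b by apply: sabs_ge0.
have e1 : A ^+ 2 - B ^+ 2 = s * (sabs a ^+ 2 - sabs b ^+ 2).
  rewrite /A /B /u /v !sabs_sq !sRe_add !sIm_add !sRe_mul !sIm_mul !sRe_semb !sIm_semb.
  by field.
have ha : semb c s * a = semb c ((1 + s) / 2) * u + semb c ((1 - s) / 2) * v.
  apply: s_ext; rewrite /u /v ?sRe_add ?sIm_add ?sRe_mul ?sIm_mul ?sRe_add ?sIm_add
     ?sRe_mul ?sIm_mul ?sRe_semb ?sIm_semb; by field.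
have hb : semb c s * b = semb c ((1 - s) / 2) * u + semb c ((1 + s) / 2) * v.
  apply: s_ext; rewrite /u /v ?sRe_add ?sIm_add ?sRe_mul ?sIm_mul ?sRe_add ?sIm_add
     ?sRe_mul ?sIm_mul ?sRe_semb ?sIm_semb; by field.
have p1 : 0 <= (1 + s) / 2 by apply: divr_ge0; lra.
have p2 : 0 <= (1 - s) / 2 by apply: divr_ge0; lra.
have t1 : s * sabs a <= (1 + s) / 2 * A + (1 - s) / 2 * B.
  have := sabs_add (semb c ((1 + s) / 2) * u) (semb c ((1 - s) / 2) * v).
  by rewrite -ha !sabs_sembM !ger0_norm.
have t2 : s * sabs b <= (1 - s) / 2 * A + (1 + s) / 2 * B.
  have := sabs_add (semb c ((1 - s) / 2) * u) (semb c ((1 + s) / 2) * v).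
  by rewrite -hb !sabs_sembM !ger0_norm.
have hh : s * (sabs a + sabs b) <= A + B by lra.
have hh0 : 0 <= s * (sabs a + sabs b) by apply: mulr_ge0 => //; lra.
have hsq : (s * (sabs a + sabs b)) ^+ 2 <= (A + B) ^+ 2.
  by rewrite ler_pXn2r // ?inE ?nnegrE //; lra.
have eG : ((A - B) * (A + B)) ^+ 2 = s ^+ 2 * (sabs a - sabs b) ^+ 2 * (sabs a + sabs b) ^+ 2.
  have -> : (A - B) * (A + B) = A ^+ 2 - B ^+ 2 by ring.
  rewrite e1; ring.
have [h0|hpos] := eqVneq (A + B) 0.
  have : A = 0 by lra.
  have : B = 0 by lra.
  move=> -> ->; rewrite subrr expr0n /=; exact: sqr_ge0.
have hp : 0 < (A + B) ^+ 2.
  by rewrite exprn_gt0 // lt_def hpos /=; lra.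
rewrite -(ler_pM2r hp).
have : (A - B) ^+ 2 * (A + B) ^+ 2 = s ^+ 2 * (sabs a - sabs b) ^+ 2 * (sabs a + sabs b) ^+ 2.
  by rewrite -exprMn.
move=> ->.
have -> : s ^+ 2 * (sabs a - sabs b) ^+ 2 * (sabs a + sabs b) ^+ 2 =
   (sabs a - sabs b) ^+ 2 * (s * (sabs a + sabs b)) ^+ 2 by ring.
by apply: ler_wpM2l; rewrite ?sqr_ge0.
Qed.
End Key.

Section IP.
Variables (R : realType) (c : bool) (H : lmodType (scal R c)) (ip : H -> H -> scal R c).
Hypothesis Hip : is_inner_product ip.

Lemma ip_lin a (x y z : H) : ip (a *: x + y) z = a * ip x z + ip y z.
Proof. by case: Hip. Qed.
Lemma ip_conj (x y : H) : ip y x = sconj (ip x y).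
Proof. by case: Hip. Qed.
Lemma ip_pos (x : H) : sIm (ip x x) = 0 /\ 0 <= sRe (ip x x).
Proof. by case: Hip => _ _ h _; apply: h. Qed.
Lemma ip_def (x : H) : ip x x = 0 -> x = 0.
Proof. by case: Hip => _ _ _; apply. Qed.

Lemma ip0l z : ip 0 z = 0.
Proof.
have := ip_lin 1 0 0 z; rewrite scaler0 addr0 mul1r => h.
by have := congr1 (fun t => t - ip 0 z) h; rewrite /= subrr addrK => <-.
Qed.
Lemma ipZl a x z : ip (a *: x) z = a * ip x z.
Proof. by have := ip_lin a x 0 z; rewrite addr0 ip0l addr0. Qed.
Lemma ipDl x y z : ip (x + y) z = ip x z + ip y z.
Proof. by have := ip_lin 1 x y z; rewrite scale1r mul1r. Qed.
Lemma ipNl x z : ip (- x) z = - ip x z.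
Proof. by rewrite -scaleN1r ipZl mulN1r. Qed.
Lemma ipBl x y z : ip (x - y) z = ip x z - ip y z.
Proof. by rewrite ipDl ipNl. Qed.
Lemma ipZr a x z : ip z (a *: x) = sconj a * ip z x.
Proof. by rewrite ip_conj ipZl sconj_mul -ip_conj. Qed.
Lemma ipDr x y z : ip z (x + y) = ip z x + ip z y.
Proof. by rewrite ip_conj ipDl sconj_add -!ip_conj. Qed.
Lemma ipNr x z : ip z (- x) = - ip z x.
Proof. by rewrite ip_conj ipNl sconj_opp -ip_conj. Qed.
Lemma ipBr x y z : ip z (x - y) = ip z x - ip z y.
Proof. by rewrite ipDr ipNr. Qed.
Lemma ip0r z : ip z 0 = 0.
Proof. by rewrite ip_conj ip0l sconj0. Qed.

Lemma hnorm_ge0 x : 0 <= hnorm ip x.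
Proof. by rewrite /hnorm sqrtr_ge0. Qed.
Lemma hnorm_sq x : hnorm ip x ^+ 2 = sRe (ip x x).
Proof. by rewrite /hnorm sqr_sqrtr //; case: (ip_pos x). Qed.
Lemma ip_self x : ip x x = semb c (hnorm ip x ^+ 2).
Proof.
by apply: s_ext; rewrite ?sRe_semb ?sIm_semb ?hnorm_sq //; case: (ip_pos x).
Qed.
Lemma hnorm_eq0 x : hnorm ip x = 0 -> x = 0.
Proof. by move=> h; apply: ip_def; rewrite ip_self h expr0n /= semb0. Qed.
Lemma hnormZ a x : hnorm ip (a *: x) = sabs a * hnorm ip x.
Proof.
rewrite {1}/hnorm ipZl ipZr ip_self mulrA sconj_mulr -semb_mul sRe_semb.
by rewrite -exprMn sqrtr_sqr ger0_norm // mulr_ge0 ?sabs_ge0 ?hnorm_ge0.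
Qed.
End IP.


Lemma inf_min (R : realType) (S : set R) m : S m -> (forall r, S r -> m <= r) -> inf S = m.
Proof.
move=> Sm lb; apply/le_anti/andP; split.
  by apply: ge_inf => //; exists m.
by apply: lb_le_inf => //; exists m.
Qed.

Lemma phase_l (R : realType) c (z : scal R c) :
  exists l : scal R c, sabs l = 1 /\ sconj l * z = semb c (sabs z).
Proof.
have [->|z0] := eqVneq z 0.
  exists 1; split; first by rewrite -(semb1 _ c) sabs_semb normr1.
  by rewrite mulr0 -(semb0 _ c) sabs_semb normr0.
have hz : 0 < sabs z.
  by rewrite lt_def sabs_ge0 andbT; apply/eqP => /sabs_eq0 h; rewrite h eqxx in z0.
exists (z * semb c (sabs z)^-1); split.
  by rewrite sabs_mul sabs_semb ger0_norm ?invr_ge0 ?sabs_ge0 // mulfV // gt_eqF.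
rewrite sconj_mul sconj_semb mulrC mulrA sconj_mulr -semb_mul; congr semb.
by rewrite expr2 -mulrA mulfV ?mulr1 // gt_eqF.
Qed.

Section PD.
Variables (R : realType) (c : bool) (H : lmodType (scal R c)) (ip : H -> H -> scal R c).
Hypothesis Hip : is_inner_product ip.

Lemma expand_re (u v : H) l :
  sRe (ip (u - l *: v) (u - l *: v)) =
  hnorm ip u ^+ 2 + sabs l ^+ 2 * hnorm ip v ^+ 2 - 2 * sRe (sconj l * ip u v).
Proof.
rewrite (ipBl Hip) !(ipBr Hip) !(ipZl Hip) !(ipZr Hip) mulrA sconj_mulr.
rewrite (ip_self Hip u) (ip_self Hip v) (ip_conj Hip u v).
rewrite -semb_mul !sRe_add !sRe_opp !sRe_semb sRe_add sRe_opp sRe_semb.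
have -> : sRe (l * sconj (ip u v)) = sRe (sconj l * ip u v).
  by rewrite -sRe_conj sconj_mul sconjK.
ring.
Qed.

Lemma pd_orth (u v : H) : ip u v = 0 ->
  phase_dist ip u v = Num.sqrt (hnorm ip u ^+ 2 + hnorm ip v ^+ 2).
Proof.
move=> h; apply: inf_min.
  exists 1; split; first by rewrite -(semb1 _ c) sabs_semb normr1.
  by rewrite /hnorm expand_re h mulr0 sRe0 mulr0 subr0 -(semb1 _ c) sabs_semb normr1 expr1n mul1r.
move=> r [l [hl ->]].
by rewrite /hnorm expand_re h mulr0 sRe0 mulr0 subr0 hl expr1n mul1r.
Qed.

Lemma pd_gen (x y : H) l0 : sabs l0 = 1 -> sconj l0 * ip x y = semb c (sabs (ip x y)) ->
  phase_dist ip x y = hnorm ip (x - l0 *: y).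
Proof.
move=> hl0 he; apply: inf_min; first by exists l0.
move=> r [l [hl ->]].
rewrite /hnorm ler_sqrt; last by case: (ip_pos Hip (x - l *: y)).
rewrite !expand_re hl hl0 he sRe_semb expr1n !mul1r.
suff : sRe (sconj l * ip x y) <= sabs (ip x y) by lra.
apply: le_trans (sRe_le_abs _) _.
by rewrite sabs_mul sabs_conj hl mul1r.
Qed.
End PD.


Lemma sabs_opp (R : realType) c (a : scal R c) : sabs (- a) = sabs a.
Proof. by rewrite !sabs_def sRe_opp sIm_opp !sqrrN. Qed.

Lemma rev_tri (R : realType) c (a b : scal R c) :
  (sabs a - sabs b) ^+ 2 <= sabs (a - b) ^+ 2.
Proof.
have h1 := sabs_add (a - b) b; rewrite subrK in h1.
have h2 := sabs_add (b - a) a; rewrite subrK -opprB sabs_opp in h2.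
have := sabs_ge0 (a - b). nra.
Qed.

Section AT.
Variables (R : realType) (c : bool) (H : lmodType (scal R c)) (ip : H -> H -> scal R c).
Hypothesis Hip : is_inner_product ip.
Variables (d : measure_display) (T : measurableType d)
    (mu : {measure set T -> \bar R}) (xt : T -> H).
Hypothesis Hframe : is_continuous_frame ip mu xt.

Lemma mF v : measurable_fun setT (fun t => sabs (ip v (xt t))).
Proof.
have -> : (fun t => sabs (ip v (xt t))) =
   Num.sqrt \o (fun t => sRe (ip v (xt t)) ^+ 2 + sIm (ip v (xt t)) ^+ 2).
  by apply: funext => t; rewrite /= sabs_def.
apply: measurableT_comp; first exact: continuous_measurable_fun (@sqrt_continuous R).
case: Hframe => /(_ v) [m1 m2] _.
by apply: measurable_funD; apply: measurable_funX.
Qed.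

Lemma mG v w : measurable_fun setT
   (fun t => ((sabs (ip v (xt t)) - sabs (ip w (xt t))) ^+ 2)%:E).
Proof.
apply/measurable_EFinP; apply: measurable_funX; apply: measurable_funB; exact: mF.
Qed.

Lemma fin_G v w : (\int[mu]_(t in setT)
   ((sabs (ip v (xt t)) - sabs (ip w (xt t))) ^+ 2)%:E)%E \is a fin_num.
Proof.
rewrite ge0_fin_numE; last by apply: integral_ge0 => t _; rewrite lee_fin sqr_ge0.
case: Hframe => _ [A [B [A0 [AB hb]]]].
apply: (@le_lt_trans _ _ (B * hnorm ip (v - w) ^+ 2)%:E); last exact: ltry.
apply: le_trans (proj2 (hb (v - w))).
apply: ge0_le_integral => //.
- by move=> t _; rewrite lee_fin sqr_ge0.
- exact: mG.
- by apply/measurable_EFinP; apply: measurable_funX; exact: mF.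
- by move=> t _; rewrite lee_fin (ipBl Hip) rev_tri.
Qed.

Lemma N_le x1 y1 x y :
  (forall t, (sabs (ip x1 (xt t)) - sabs (ip y1 (xt t))) ^+ 2 <=
             (sabs (ip x (xt t)) - sabs (ip y (xt t))) ^+ 2) ->
  absTheta_dist ip mu xt x1 y1 <= absTheta_dist ip mu xt x y.
Proof.
move=> hle; rewrite /absTheta_dist ler_sqrt; last first.
  by apply: fine_ge0; apply: integral_ge0 => t _; rewrite lee_fin sqr_ge0.
apply: fine_le; [exact: fin_G|exact: fin_G|].
apply: ge0_le_integral => //.
- by move=> t _; rewrite lee_fin sqr_ge0.
- exact: mG.
- exact: mG.
- by move=> t _; rewrite lee_fin.
Qed.

Lemma N_sym x y : absTheta_dist ip mu xt y x = absTheta_dist ip mu xt x y.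
Proof.
rewrite /absTheta_dist; congr (Num.sqrt (fine _)).
by apply: eq_integral => t _; rewrite -sqrrN opprB.
Qed.

Lemma N_scale k x y : 0 <= k ->
  absTheta_dist ip mu xt (semb c k *: x) (semb c k *: y) = k * absTheta_dist ip mu xt x y.
Proof.
move=> k0; rewrite /absTheta_dist.
rewrite (eq_integral (fun t => ((k ^+ 2)%:E *
   ((sabs (ip x (xt t)) - sabs (ip y (xt t))) ^+ 2)%:E)%E)); last first.
  move=> t _; rewrite !(ipZl Hip) !sabs_mul sabs_semb ger0_norm // -EFinM.
  by congr EFin; ring.
rewrite ge0_integralZl_EFin //.
- by rewrite fineM // ?fin_G // sqrtrM ?sqr_ge0 // sqrtr_sqr ger0_norm.
- by move=> t _; rewrite lee_fin sqr_ge0.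
- exact: mG.
- exact: sqr_ge0.
Qed.
End AT.


Section Main.
Variables (R : realType) (c : bool) (H : lmodType (scal R c)) (ip : H -> H -> scal R c).
Hypothesis Hip : is_inner_product ip.
Variables (d : measure_display) (T : measurableType d)
    (mu : {measure set T -> \bar R}) (xt : T -> H).
Hypothesis Hframe : is_continuous_frame ip mu xt.

Lemma ip_real_comb (u v : H) U V r1 r2 :
  ip u u = semb c U -> ip v v = semb c V -> ip u v = semb c r1 -> ip v u = semb c r2 ->
  forall a b a' b',
  ip (semb c a *: u + semb c b *: v) (semb c a' *: u + semb c b' *: v) =
  semb c (a * a' * U + a * b' * r1 + b * a' * r2 + b * b' * V).
Proof.
move=> hU hV h1 h2 a b a' b'.
rewrite !(ipDl Hip) !(ipDr Hip) !(ipZl Hip) !(ipZr Hip) !sconj_semb hU hV h1 h2.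
rewrite -!semb_mul -!semb_add; congr semb; ring.
Qed.

Lemma finish (x y x1 y1 : H) (K : R) :
  (exists a b : scal R c, x1 = a *: x + b *: y) ->
  (exists a b : scal R c, y1 = a *: x + b *: y) ->
  ip x1 y1 = 0 -> hnorm ip y1 <= hnorm ip x1 -> 0 < hnorm ip x1 ->
  absTheta_dist ip mu xt x1 y1 / Num.sqrt (hnorm ip x1 ^+ 2 + hnorm ip y1 ^+ 2) <= K ->
  exists xo yo : H,
    (exists a b : scal R c, xo = a *: x + b *: y) /\
    (exists a b : scal R c, yo = a *: x + b *: y) /\
    hnorm ip xo = 1 /\ hnorm ip yo <= 1 /\ ip xo yo = 0 /\
    absTheta_dist ip mu xt xo yo / phase_dist ip xo yo <= K /\
    absTheta_dist ip mu xt xo yo / phase_dist ip xo yo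
      = absTheta_dist ip mu xt xo yo / Num.sqrt (1 + hnorm ip yo ^+ 2).
Proof.
move=> [a1 [b1 ex1]] [a2 [b2 ey1]] horth hle hpos hK.
set m := hnorm ip x1.
set k := m^-1.
have k0 : 0 < k by rewrite invr_gt0.
have hx : hnorm ip (semb c k *: x1) = 1.
  by rewrite (hnormZ Hip) sabs_semb ger0_norm ?(ltW k0) // mulVf // gt_eqF.
have hy : hnorm ip (semb c k *: y1) = k * hnorm ip y1.
  by rewrite (hnormZ Hip) sabs_semb ger0_norm ?(ltW k0).
have ho : ip (semb c k *: x1) (semb c k *: y1) = 0.
  by rewrite (ipZl Hip) (ipZr Hip) horth !mulr0.
have hpd : phase_dist ip (semb c k *: x1) (semb c k *: y1) =
           Num.sqrt (1 + hnorm ip (semb c k *: y1) ^+ 2).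
  by rewrite (pd_orth Hip) // hx expr1n.
exists (semb c k *: x1), (semb c k *: y1); split; [|split; [|split; [|split; [|split; [|split]]]]].
- by exists (semb c k * a1), (semb c k * b1); rewrite ex1 scalerDr !scalerA.
- by exists (semb c k * a2), (semb c k * b2); rewrite ey1 scalerDr !scalerA.
- exact: hx.
- by rewrite hy -(mulVf (lt0r_neq0 hpos)) ler_pM2l.
- exact: ho.
- rewrite hpd (N_scale Hip) ?(ltW k0) // hy.
  have -> : 1 + (k * hnorm ip y1) ^+ 2 = k ^+ 2 * (hnorm ip x1 ^+ 2 + hnorm ip y1 ^+ 2).
    have km : k * hnorm ip x1 = 1 by rewrite /k mulVf // lt0r_neq0.
    by rewrite mulrDr -!exprMn km expr1n.
  rewrite sqrtrM ?sqr_ge0 // sqrtr_sqr ger0_norm ?(ltW k0) //.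
  by rewrite -mulf_div divff ?gt_eqF // mul1r.
- by rewrite hpd.
Qed.
End Main.


Theorem theorem2p1 (R : realType) (c : bool) (H : lmodType (scal R c))
    (ip : H -> H -> scal R c)
    (Hip : is_inner_product ip) (Hcompl : hcomplete ip)
    (d : measure_display) (T : measurableType d)
    (mu : {measure set T -> \bar R}) (xt : T -> H)
    (Hframe : is_continuous_frame ip mu xt)
    (x y : H)
    (Hxy : forall l : scal R c, sabs l = 1 -> x <> l *: y) :
  exists xo yo : H,
    (exists a b : scal R c, xo = a *: x + b *: y) /\
    (exists a b : scal R c, yo = a *: x + b *: y) /\
    hnorm ip xo = 1 /\ hnorm ip yo <= 1 /\ ip xo yo = 0 /\
    absTheta_dist ip mu xt xo yo / phase_dist ip xo yo
      <= absTheta_dist ip mu xt x y / phase_dist ip x y /\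
    absTheta_dist ip mu xt xo yo / phase_dist ip xo yo
      = absTheta_dist ip mu xt xo yo / Num.sqrt (1 + hnorm ip yo ^+ 2).
Proof.
have [l0 [hl0 hz]] := phase_l (ip x y).
have r0 : 0 <= sabs (ip x y) by apply: sabs_ge0.
pose r := sabs (ip x y).
have r0r : 0 <= r := r0.
pose w := l0 *: y.
have hxw : ip x w = semb c r by rewrite /w (ipZr Hip) hz.
have hwx : ip w x = semb c r by rewrite (ip_conj Hip) hxw sconj_semb.
have hnw : hnorm ip w = hnorm ip y by rewrite /w (hnormZ Hip) hl0 mul1r.
pose X := hnorm ip x ^+ 2.
pose W := hnorm ip w ^+ 2.
have hP2 : hnorm ip (x - w) ^+ 2 = X + W - 2 * r.
  by rewrite (hnorm_sq Hip) /w (expand_re Hip) hl0 hz sRe_semb expr1n mul1r /X /W /r -/w hnw.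
have hD : phase_dist ip x y = hnorm ip (x - w) by exact: (pd_gen Hip hl0 hz).
have Pne : x - w != 0.
  by rewrite subr_eq0; apply/eqP; apply: Hxy.
have hPpos : 0 < hnorm ip (x - w).
  rewrite lt_def (hnorm_ge0 ip) andbT; apply/eqP => /(hnorm_eq0 Hip) h.
  by rewrite h eqxx in Pne.
pose Pn := X + W - 2 * r.
pose Qn := X + W + 2 * r.
have Pn0 : 0 < Pn by rewrite /Pn -hP2 exprn_gt0.
have Qn0 : 0 < Qn by rewrite /Qn; move: Pn0; rewrite /Pn; lra.
pose s := Num.sqrt (Pn / Qn).
have s0 : 0 <= s by apply: sqrtr_ge0.
have s1 : s <= 1.
  rewrite /s -sqrtr1 ler_sqrt // ler_pdivrMr // mul1r /Pn /Qn; lra.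
have hs2 : s ^+ 2 * Qn = Pn.
  by rewrite /s sqr_sqrtr ?divr_ge0 ?(ltW Pn0) ?(ltW Qn0) // divfK // gt_eqF.
pose x' := semb c ((1 + s) / 2) *: x + semb c ((s - 1) / 2) *: w.
pose y' := semb c ((s - 1) / 2) *: x + semb c ((1 + s) / 2) *: w.
have hxx := ip_self Hip x.
have hww := ip_self Hip w.
have horth : ip x' y' = 0.
  rewrite /x' /y' (ip_real_comb Hip hxx hww hxw hwx) -(semb0 _ c); congr semb.
  apply/eqP; rewrite -subr_eq0.
  have -> : (1 + s) / 2 * ((s - 1) / 2) * hnorm ip x ^+ 2 + (1 + s) / 2 * ((1 + s) / 2) * r +
      (s - 1) / 2 * ((s - 1) / 2) * r + (s - 1) / 2 * ((1 + s) / 2) * hnorm ip w ^+ 2 - 0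
      = (s ^+ 2 * Qn - Pn) / 4 by rewrite /Qn /Pn /X /W; field.
  by rewrite hs2 subrr mul0r.
have hsum : hnorm ip x' ^+ 2 + hnorm ip y' ^+ 2 = Pn.
  rewrite !(hnorm_sq Hip) /x' /y' !(ip_real_comb Hip hxx hww hxw hwx) !sRe_semb.
  apply/eqP; rewrite -subr_eq0.
  set E := (X in X - Pn).
  have -> : E - Pn = (s ^+ 2 * Qn - Pn) / 2 by rewrite /E /Qn /Pn /X /W; field.
  by rewrite hs2 subrr mul0r.
have hS : Num.sqrt (hnorm ip x' ^+ 2 + hnorm ip y' ^+ 2) = hnorm ip (x - w).
  by rewrite hsum /Pn -hP2 sqrtr_sqr ger0_norm // hnorm_ge0.
have hN : absTheta_dist ip mu xt x' y' <= absTheta_dist ip mu xt x y.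
  apply: (N_le Hip Hframe) => t.
  rewrite /x' /y' /w !(ipDl Hip) !(ipZl Hip).
  have := key_ineq (ip x (xt t)) (l0 * ip y (xt t)) s0 s1.
  by rewrite (sabs_mul l0) hl0 mul1r.
have hK : absTheta_dist ip mu xt x' y' / Num.sqrt (hnorm ip x' ^+ 2 + hnorm ip y' ^+ 2)
          <= absTheta_dist ip mu xt x y / phase_dist ip x y.
  by rewrite hS hD ler_pM2r // invr_gt0.
have sx' : exists a b : scal R c, x' = a *: x + b *: y.
  by exists (semb c ((1 + s) / 2)), (semb c ((s - 1) / 2) * l0); rewrite /x' /w scalerA.
have sy' : exists a b : scal R c, y' = a *: x + b *: y.
  by exists (semb c ((s - 1) / 2)), (semb c ((1 + s) / 2) * l0); rewrite /y' /w scalerA.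
have ge1 := hnorm_ge0 ip x'.
have ge2 := hnorm_ge0 ip y'.
have [hle|hlt] := leP (hnorm ip y') (hnorm ip x').
  apply: (finish Hip Hframe sx' sy' horth hle) => //.
  rewrite lt_def ge1 andbT; apply/eqP => h0.
  move: hsum; rewrite h0 => hsum.
  have : hnorm ip y' = 0 by apply/le_anti; rewrite ge2 -h0 hle.
  move=> h1; move: hsum; rewrite h1 expr0n /= addr0 => h2.
  by move: Pn0; rewrite -h2 ltxx.
apply: (finish Hip Hframe sy' sx').
- by rewrite (ip_conj Hip) horth sconj0.
- exact: ltW.
- exact: le_lt_trans hlt.
- by rewrite (N_sym ip mu xt x' y') addrC.
Qed.
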